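(* Let $\overline{\boldsymbol{Q}},\overline{\boldsymbol{V}}\in\mathcal{O}_d$ represent points $[\overline{\boldsymbol{Q}}],[\overline{\boldsymbol{V}}]$ of the Grassmann manifold $\mathcal{G}_{d,r}$, chosen such that $\overline{\boldsymbol{V}}=\Pi_{\overline{\boldsymbol{Q}}}(\overline{\boldsymbol{V}})$. Define $\Gamma^{+}_{\overline{\boldsymbol{Q}}\to\overline{\boldsymbol{V}}}$ by \[ \Gamma^{+}_{\overline{\boldsymbol{Q}}\to\overline{\boldsymbol{V}}}(\boldsymbol{Q}_i)=\mathrm{Exp}_{\overline{\boldsymbol{V}}}\Big(\Gamma_{\overline{\boldsymbol{Q}}\to\overline{\boldsymbol{V}}}\big(\mathrm{Log}_{\overline{\boldsymbol{Q}}}(\boldsymbol{Q}_i)\big)\Big) \] for $\boldsymbol{Q}_i\in\mathcal{O}_d$. Then \[ \Gamma^{+}_{\overline{\boldsymbol{Q}}\to\overline{\boldsymbol{V}}}(\boldsymbol{Q}_i)\sim \overline{\boldsymbol{V}}\,\overline{\boldsymbol{Q}}^T\boldsymbol{Q}_i , \] and if $\boldsymbol{Q}_i$ is chosen such that $\boldsymbol{Q}_i=\Pi_{\overline{\boldsymbol{Q}}}(\boldsymbol{Q}_i)$, then equality holds: $\Gamma^{+}_{\overline{\boldsymbol{Q}}\to\overline{\boldsymbol{V}}}(\boldsymbol{Q}_i)=\overline{\boldsymbol{V}}\,\overline{\boldsymbol{Q}}^T\boldsymbol{Q}_i$.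
   Context: $\mathcal{O}_d$ is the set of $d\times d$ orthogonal matrices and $0<r<d$. For $\boldsymbol{Q}\in\mathcal{O}_d$, $[\boldsymbol{Q}]=\{\boldsymbol{Q}\,\mathrm{diag}(\boldsymbol{Q}_r,\boldsymbol{Q}_{d-r}):\boldsymbol{Q}_r\in\mathcal{O}_r,\boldsymbol{Q}_{d-r}\in\mathcal{O}_{d-r}\}$, i.e. the class of orthogonal matrices whose $r$ leftmost columns span the same subspace; $\mathcal{G}_{d,r}=\{[\boldsymbol{Q}]\}$, and $\boldsymbol{Q}_1\sim\boldsymbol{Q}_2$ means $\boldsymbol{Q}_1,\boldsymbol{Q}_2$ lie in the same class. All subspaces considered are assumed to have all principal angles between them strictly smaller than $\pi/2$. For a $(d-r)\times r$ matrix $\boldsymbol{B}$ write $\boldsymbol{B}^{\mathrm{skew}}=\begin{bmatrix}\boldsymbol{0}&-\boldsymbol{B}^T\\ \boldsymbol{B}&\boldsymbol{0}\end{bmatrix}$; tangent vectors at $\boldsymbol{Q}$ are $\boldsymbol{Q}\boldsymbol{B}^{\mathrm{skew}}$. Exponential map: $\mathrm{Exp}_{\boldsymbol{Q}}(\boldsymbol{Q}\boldsymbol{B}^{\mathrm{skew}})=\boldsymbol{Q}\exp(\boldsymbol{B}^{\mathrm{skew}})$ (matrix exponential). Logarithmic map: write $\boldsymbol{Q}=[\boldsymbol{G}\ \boldsymbol{G}_\perp]$, $\boldsymbol{Q}_0=[\boldsymbol{G}_0\ \boldsymbol{G}_{0,\perp}]$ with $\boldsymbol{G},\boldsymbol{G}_0\in\mathbb{R}^{d\times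 r}$; take a compact SVD $(\boldsymbol{I}-\boldsymbol{G}\boldsymbol{G}^T)\boldsymbol{G}_0(\boldsymbol{G}^T\boldsymbol{G}_0)^{-1}=\boldsymbol{U}\boldsymbol{\Sigma}\boldsymbol{V}^T$, let $\boldsymbol{B}_0$ be defined by $\boldsymbol{G}_\perp\boldsymbol{B}_0=\boldsymbol{U}\arctan(\boldsymbol{\Sigma})\boldsymbol{V}^T$, and set $\mathrm{Log}_{\boldsymbol{Q}}(\boldsymbol{Q}_0)=\boldsymbol{Q}\boldsymbol{B}_0^{\mathrm{skew}}$. The projection is $\Pi_{\boldsymbol{Q}_1}(\boldsymbol{Q}_2)=\mathrm{Exp}_{\boldsymbol{Q}_1}(\mathrm{Log}_{\boldsymbol{Q}_1}(\boldsymbol{Q}_2))$, the representative of $[\boldsymbol{Q}_2]$ closest to $\boldsymbol{Q}_1$. Parallel transport: if $\widetilde{\boldsymbol{Q}}=\boldsymbol{Q}\exp(\widetilde{\boldsymbol{B}}^{\mathrm{skew}})$, then parallel transport along this geodesic of the tangent vector $\boldsymbol{Q}\boldsymbol{B}^{\mathrm{skew}}$ is $\Gamma_{\boldsymbol{Q}\to\widetilde{\boldsymbol{Q}}}(\boldsymbol{Q}\boldsymbol{B}^{\mathrm{skew}})=\widetilde{\boldsymbol{Q}}\boldsymbol{B}^{\mathrm{skew}}$. In the paper the notation $\Gamma_{\overline{\boldsymbol{Q}}\to\overline{\boldsymbol{V}}}(\boldsymbol{Q}_i)$ applied to a point is used for the matrix $\overline{\boldsymbol{V}}\,\overline{\boldsymbol{Q}}^T\boldsymbol{Q}_i$.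 *)

(* Defs.v *)
From HB Require Import structures.
From mathcomp Require Import all_boot all_order all_algebra.
From mathcomp Require Import all_classical all_reals all_analysis.
Set Implicit Arguments. Unset Strict Implicit. Unset Printing Implicit Defensive.
Import Order.TTheory GRing.Theory Num.Theory numFieldNormedType.Exports.
Local Open Scope ring_scope.

Section Grassmann.
Variable R : realType.
Variables r s : nat.
Local Notation d := (r + s)%N.

Definition orthogonal_mx n (Q : 'M[R]_n) : Prop :=
  Q^T *m Q = 1%:M /\ Q *m Q^T = 1%:M.

Definition mexp n (A : 'M[R]_n) : 'M[R]_n :=
  \matrix_(i, j) limn (fun N : nat => ((\sum_(k < N) (k`!%:R)^-1 *: A ^+ k) i j : R)).

Definition skewB (B : 'M[R]_(s, r)) : 'M[R]_d :=
  block_mx 0 (- B^T) B 0.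

Definition grass_equiv (Q1 Q2 : 'M[R]_d) : Prop :=
  exists (Qr : 'M[R]_r) (Qs : 'M[R]_s),
    orthogonal_mx Qr /\ orthogonal_mx Qs /\ Q2 = Q1 *m block_mx Qr 0 0 Qs.

Definition Gpart (Q : 'M[R]_d) : 'M[R]_(d, r) := lsubmx Q.
Definition Gperp (Q : 'M[R]_d) : 'M[R]_(d, s) := rsubmx Q.

Definition compact_svd m n k (M : 'M[R]_(m, n)) (U : 'M[R]_(m, k))
    (sg : 'rV[R]_k) (V : 'M[R]_(n, k)) : Prop :=
  U^T *m U = 1%:M /\ V^T *m V = 1%:M /\ (forall i, 0 < sg 0 i) /\
  M = U *m diag_mx sg *m V^T.

(* B0 is the matrix defining Log_Q(Q0) = Q B0^skew *)
Definition LogRel (Q Q0 : 'M[R]_d) (B0 : 'M[R]_(s, r)) : Prop :=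
  let G := Gpart Q in let G0 := Gpart Q0 in
  let M := (1%:M - G *m G^T) *m G0 *m invmx (G^T *m G0) in
  exists (k : nat) (U : 'M[R]_(d, k)) (sg : 'rV[R]_k) (V : 'M[R]_(r, k)),
    compact_svd M U sg V /\
    Gperp Q *m B0 = U *m diag_mx (map_mx atan sg) *m V^T.

(* all principal angles between span(G1), span(G2) < pi/2 *)
Definition angles_lt_pi2 (Q1 Q2 : 'M[R]_d) : Prop :=
  (Gpart Q1)^T *m Gpart Q2 \in unitmx.

End Grassmann.

(* Main.v *)
Require Import Defs.
From mathcomp Require Import all_boot all_order all_algebra.
From mathcomp Require Import all_classical all_reals all_analysis.
From mathcomp Require Import ring lra.
Import GRing.Theory Num.Theory.
Local Open Scope ring_scope.

Module Aux.
Import numFieldNormedType.Exports.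
Local Open Scope classical_set_scope.
Local Open Scope ring_scope.

Section S.
Variable R : realType.

Lemma nat_par (n : nat) : exists m, n = m.*2 \/ n = m.*2.+1.
Proof.
elim: n => [|n [m [->|->]]]; first by exists 0%N; left.
- by exists m; right.
- by exists m.+1; left; rewrite doubleS.
Qed.

Lemma cos_coeffS (x : R) n : cos_coeff x n.+1 = - (x * sin_coeff x n) / n.+1%:R.
Proof.
rewrite /cos_coeff /sin_coeff /= factS natrM invfM.
have [m [->|->]] := nat_par n.
  by rewrite odd_double /= !mul0r mulr0 oppr0 mul0r.
rewrite /= odd_double /= doubleK -!exprnP !exprS; ring.
Qed.

Lemma sin_coeffS (x : R) n : sin_coeff x n.+1 = x * cos_coeff x n / n.+1%:R.
Proof.
rewrite /cos_coeff /sin_coeff /= factS natrM invfM.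
have [m [->|->]] := nat_par n.
  rewrite odd_double /= doubleK -!exprnP !exprS; ring.
by rewrite /= odd_double /= !mul0r mulr0 mul0r.
Qed.

Variable k : nat.
Implicit Types (th c sn : 'rV[R]_k).

Definition Jm th : 'M[R]_(k + k) := block_mx 0 (- diag_mx th) (diag_mx th) 0.
Definition Kf c sn : 'M[R]_(k + k) :=
  block_mx (diag_mx c) (- diag_mx sn) (diag_mx sn) (diag_mx c).
Definition cr th n : 'rV[R]_k := \row_l cos_coeff (th 0 l) n.
Definition sr th n : 'rV[R]_k := \row_l sin_coeff (th 0 l) n.

Lemma Jpow th n : (n`!%:R)^-1 *: (Jm th) ^+ n = Kf (cr th n) (sr th n).
Proof.
elim: n => [|n IH].
  rewrite /= invr1 scale1r expr0 /Kf.
  have -> : cr th 0 = const_mx 1.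
    by apply/rowP => l; rewrite !mxE /cos_coeff /= expr0 !mul1r invr1.
  have -> : sr th 0 = 0.
    by apply/rowP => l; rewrite !mxE /sin_coeff /= !mul0r.
  by rewrite linear0 oppr0 diag_const_mx -idmxE -scalar_mx_block.
rewrite exprSr factS natrM invfM -scalerA -mulmxE scalemxAl IH.
rewrite /Kf /Jm mulmx_block !mulmx0 !addr0 !add0r !mulmxN !mulNmx !mulmx_diag.
rewrite scale_block_mx; congr block_mx; apply/matrixP => i j; rewrite !mxE;
  case: (i == j); rewrite ?mulr1n ?mulr0n ?mulr0 ?oppr0 //;
  rewrite ?cos_coeffS ?sin_coeffS; field.
all: by rewrite (_ : 1 + n%:R = n.+1%:R) ?pnatr_eq0 // -natr1 addrC.
Qed.

Lemma Kf_add c1 s1 c2 s2 : Kf (c1 + c2) (s1 + s2) = Kf c1 s1 + Kf c2 s2.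
Proof. by rewrite /Kf add_block_mx !linearD. Qed.

Lemma Kf0 : Kf 0 0 = 0.
Proof. by rewrite /Kf linear0 oppr0 block_mx0. Qed.

Lemma Kf_sum N (c sn : nat -> 'rV[R]_k) :
  \sum_(n < N) Kf (c n) (sn n) = Kf (\sum_(n < N) c n) (\sum_(n < N) sn n).
Proof.
elim: N => [|N IH]; first by rewrite !big_ord0 Kf0.
by rewrite !big_ord_recr /= IH Kf_add.
Qed.

Variables r s : nat.
Variables (V : 'M[R]_(r, k)) (W : 'M[R]_(s, k)).
Hypothesis hV : V^T *m V = 1%:M.
Hypothesis hW : W^T *m W = 1%:M.

Definition Pm : 'M[R]_(r + s, k + k) := block_mx V 0 0 W.

Lemma PtP : Pm^T *m Pm = 1%:M.
Proof.
rewrite /Pm tr_block_mx mulmx_block !trmx0 !mulmx0 !mul0mx !addr0 !add0r hV hW.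
by rewrite (scalar_mx_block k k).
Qed.

Lemma Apow th n :
  (Pm *m Jm th *m Pm^T) ^+ n.+1 = Pm *m (Jm th ^+ n.+1) *m Pm^T.
Proof.
elim: n => [|n IH]; first by rewrite !expr1.
rewrite exprSr IH -!mulmxE.
rewrite [in RHS]exprSr -!mulmxE !mulmxA.
by rewrite -(mulmxA _ Pm^T) PtP mulmx1.
Qed.

Definition psum (A : 'M[R]_(r + s)) N := \sum_(n < N) (n`!%:R)^-1 *: A ^+ n.

Lemma psumS th N :
  psum (Pm *m Jm th *m Pm^T) N.+1 =
  1%:M - Pm *m Pm^T +
  Pm *m Kf (\row_l series (cos_coeff (th 0 l)) N.+1)
           (\row_l series (sin_coeff (th 0 l)) N.+1) *m Pm^T.
Proof.
have -> : \row_l series (cos_coeff (th 0 l)) N.+1 = \sum_(n < N.+1) cr th n.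
  apply/rowP => l; rewrite summxE mxE /series /= big_mkord.
  by apply: eq_bigr => n _; rewrite mxE.
have -> : \row_l series (sin_coeff (th 0 l)) N.+1 = \sum_(n < N.+1) sr th n.
  apply/rowP => l; rewrite summxE mxE /series /= big_mkord.
  by apply: eq_bigr => n _; rewrite mxE.
rewrite -Kf_sum mulmx_sumr mulmx_suml big_ord_recl /=.
rewrite -Jpow expr0 fact0 invr1 scale1r mulmx1.
rewrite /psum big_ord_recl /= expr0 fact0 invr1 scale1r.
rewrite addrC addrA subrK addrC idmxE; congr (_ + _).
apply: eq_bigr => i _; rewrite -Jpow -scalemxAr scalemxAl.
by rewrite /bump leq0n /= add1n Apow -!scalemxAl.
Qed.

Lemma lin_sum m n (f : 'rV[R]_k -> 'M[R]_(m, n))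
  (hf : forall a x y, f (a *: x + y) = a *: f x + f y) (u : 'rV[R]_k) :
  f u = \sum_l u 0 l *: f (delta_mx 0 l).
Proof.
have f0 : f 0 = 0.
  have := hf 1 0 0; rewrite scale1r addr0 => /eqP.
  by rewrite -subr_eq0 scale1r opprD addrA subrr add0r oppr_eq0 => /eqP.
rewrite {1}(row_sum_delta u).
elim/big_rec2: _ => [//|l y1 y2 _ <-].
by rewrite hf.
Qed.

Lemma cvg_bigsum (I : Type) (rr : seq I) (F : I -> nat -> R) (a : I -> R) :
  (forall i, F i @ \oo --> a i) ->
  (fun N => \sum_(i <- rr) F i N) @ \oo --> \sum_(i <- rr) a i.
Proof.
move=> h; elim: rr => [|i rr IH].
  rewrite big_nil; under eq_cvg do rewrite big_nil; exact: cvg_cst.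
rewrite big_cons; under eq_cvg do rewrite big_cons.
exact: cvgD.
Qed.

Lemma cvg_cos_series (x : R) : (fun N => series (cos_coeff x) N.+1) @ \oo --> cos x.
Proof.
have := @is_cvg_series_cos_coeff R x; rewrite -(cvg_shiftS (series (cos_coeff x))).
by rewrite cos.unlock.
Qed.

Lemma cvg_sin_series (x : R) : (fun N => series (sin_coeff x) N.+1) @ \oo --> sin x.
Proof.
have := @is_cvg_series_sin_coeff R x; rewrite -(cvg_shiftS (series (sin_coeff x))).
by rewrite sin.unlock.
Qed.

Definition Ef th : 'M[R]_(r + s) :=
  1%:M - Pm *m Pm^T + Pm *m Kf (\row_l cos (th 0 l)) (\row_l sin (th 0 l)) *m Pm^T.

Lemma cvg_lin m n (f : 'rV[R]_k -> 'M[R]_(m, n))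
  (hf : forall a x y, f (a *: x + y) = a *: f x + f y) (u : nat -> 'rV[R]_k) (u0 : 'rV[R]_k) i j :
  (forall l, (fun N => u N 0 l) @ \oo --> u0 0 l) ->
  (fun N => f (u N) i j) @ \oo --> f u0 i j.
Proof.
move=> hu; rewrite (@lin_sum m n f hf u0) summxE.
under eq_cvg do rewrite (@lin_sum m n f hf) summxE.
apply: cvg_bigsum => l; under eq_cvg do rewrite mxE.
rewrite mxE; exact: cvgMl.
Qed.

Definition Lc (c : 'rV[R]_k) : 'M[R]_(r + s) := Pm *m Kf c 0 *m Pm^T.
Definition Ls (c : 'rV[R]_k) : 'M[R]_(r + s) := Pm *m Kf 0 c *m Pm^T.

Lemma Kf_split c sn : Kf c sn = Kf c 0 + Kf 0 sn.
Proof. by rewrite -Kf_add addr0 add0r. Qed.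

Lemma Lc_lin a x y : Lc (a *: x + y) = a *: Lc x + Lc y.
Proof.
rewrite /Lc; have -> : Kf (a *: x + y) 0 = a *: Kf x 0 + Kf y 0.
  by rewrite /Kf !linearD !linearZ /= linear0 oppr0 scale_block_mx add_block_mx !scaler0 !addr0.
by rewrite mulmxDr mulmxDl -scalemxAr -scalemxAl.
Qed.

Lemma Ls_lin a x y : Ls (a *: x + y) = a *: Ls x + Ls y.
Proof.
rewrite /Ls; have -> : Kf 0 (a *: x + y) = a *: Kf 0 x + Kf 0 y.
  by rewrite /Kf !linearD !linearZ /= linear0 scale_block_mx add_block_mx !scaler0 !addr0 ?scalerN ?opprD.
by rewrite mulmxDr mulmxDl -scalemxAr -scalemxAl.
Qed.

Lemma mexp_eq th : mexp (Pm *m Jm th *m Pm^T) = Ef th.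
Proof.
apply/matrixP => i j; rewrite mxE; apply: (cvg_lim (@Rhausdorff R)).
rewrite -cvg_shiftS.
have E N : (\sum_(k0 < N.+1) k0`!%:R^-1 *: (Pm *m Jm th *m Pm^T) ^+ k0) i j =
  (1%:M - Pm *m Pm^T) i j + Lc (\row_l series (cos_coeff (th 0 l)) N.+1) i j
   + Ls (\row_l series (sin_coeff (th 0 l)) N.+1) i j.
  have := psumS th N; rewrite /psum => ->.
  by rewrite Kf_split mulmxDr mulmxDl !mxE addrA.
under eq_cvg do rewrite /= E.
have -> : Ef th i j = (1%:M - Pm *m Pm^T) i j + Lc (\row_l cos (th 0 l)) i j
   + Ls (\row_l sin (th 0 l)) i j.
  by rewrite /Ef Kf_split mulmxDr mulmxDl !mxE addrA.
apply: cvgD; first apply: cvgD; first exact: cvg_cst.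
  apply: cvg_lin; first exact: Lc_lin.
  by move=> l; under eq_cvg do rewrite mxE; rewrite mxE; exact: cvg_cos_series.
apply: cvg_lin; first exact: Ls_lin.
by move=> l; under eq_cvg do rewrite mxE; rewrite mxE; exact: cvg_sin_series.
Qed.

Definition Cr th : 'rV[R]_k := \row_l cos (th 0 l).
Definition Sr th : 'rV[R]_k := \row_l sin (th 0 l).

Lemma KtK th : (Kf (Cr th) (Sr th))^T *m Kf (Cr th) (Sr th) = 1%:M.
Proof.
rewrite /Kf tr_block_mx !linearN /= !tr_diag_mx mulmx_block.
rewrite !mulNmx !mulmxN !mulmx_diag opprK (scalar_mx_block k k).
congr block_mx; apply/matrixP => a b; rewrite !mxE;
  case: (a == b); rewrite ?mulr1n ?mulr0n ?addr0 ?oppr0 //;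
  move: (cos2Dsin2 (th 0 a)); rewrite !expr2 => h; try ring; rewrite -h; ring.
Qed.

Lemma PPt_idem : (Pm *m Pm^T) *m (Pm *m Pm^T) = Pm *m Pm^T.
Proof. by rewrite mulmxA -(mulmxA Pm) PtP mulmx1. Qed.

Lemma EtE th : (Ef th)^T *m Ef th = 1%:M.
Proof.
set K := Kf (Cr th) (Sr th).
have hE : Ef th = (1%:M - Pm *m Pm^T) + Pm *m K *m Pm^T by [].
have hEt : (Ef th)^T = (1%:M - Pm *m Pm^T) + Pm *m K^T *m Pm^T.
  by rewrite hE linearD linearB /= trmx1 !trmx_mul trmxK mulmxA.
have h1 : (1%:M - Pm *m Pm^T) *m Pm = 0.
  by rewrite mulmxBl mul1mx -mulmxA PtP mulmx1 subrr.
have h2 : Pm^T *m (1%:M - Pm *m Pm^T) = 0.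
  by rewrite mulmxBr mulmx1 mulmxA PtP mul1mx subrr.
have hQQ : (1%:M - Pm *m Pm^T) *m (1%:M - Pm *m Pm^T) = 1%:M - Pm *m Pm^T.
  by rewrite mulmxBr mulmx1 mulmxBl mul1mx PPt_idem subrr subr0.
have hsum : (1%:M - Pm *m Pm^T) + Pm *m Pm^T = 1%:M by rewrite subrK.
rewrite hEt hE.
move: (1%:M - Pm *m Pm^T) h1 h2 hQQ hsum => Q0 h1 h2 hQQ hsum.
rewrite mulmxDl !mulmxDr hQQ.
have -> : Q0 *m (Pm *m K *m Pm^T) = 0.
  by rewrite !mulmxA h1 !mul0mx.
have -> : Pm *m K^T *m Pm^T *m Q0 = 0.
  by rewrite -mulmxA h2; exact: mulmx0.
have -> : Pm *m K^T *m Pm^T *m (Pm *m K *m Pm^T) = Pm *m Pm^T.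
  rewrite !mulmxA -(mulmxA _ Pm^T Pm) PtP mulmx1 -(mulmxA _ K^T K) KtK.
  by rewrite mulmx1.
by rewrite addr0 add0r.
Qed.

Lemma Ef_block th : Ef th = block_mx
  (1%:M - V *m V^T + V *m diag_mx (Cr th) *m V^T) (- (V *m diag_mx (Sr th) *m W^T))
  (W *m diag_mx (Sr th) *m V^T) (1%:M - W *m W^T + W *m diag_mx (Cr th) *m W^T).
Proof.
rewrite /Ef /Pm /Kf tr_block_mx !trmx0 !mulmx_block.
rewrite !mulmx0 !mul0mx !addr0 !add0r ?mulmx0 ?mul0mx ?addr0 ?add0r.
rewrite (scalar_mx_block r s) opp_block_mx !add_block_mx !oppr0 !addr0 !add0r.
by rewrite mulmxN mulNmx.
Qed.

Lemma PJP th : Pm *m Jm th *m Pm^T =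
  block_mx 0 (- (V *m diag_mx th *m W^T)) (W *m diag_mx th *m V^T) 0.
Proof.
rewrite /Pm /Jm tr_block_mx !trmx0 !mulmx_block.
rewrite !mulmx0 !mul0mx !addr0 !add0r ?mulmx0 ?mul0mx ?addr0 ?add0r.
by rewrite mulmxN mulNmx.
Qed.
End S.

Section Orth.
Variable R : realType.
Variables r s : nat.

Lemma orth_split (G : 'M[R]_(r + s, r)) (H : 'M[R]_(r + s, s)) :
  (row_mx G H)^T *m row_mx G H = 1%:M -> row_mx G H *m (row_mx G H)^T = 1%:M ->
  [/\ G^T *m G = 1%:M, G^T *m H = 0, H^T *m H = 1%:M & G *m G^T + H *m H^T = 1%:M].
Proof.
rewrite tr_row_mx mul_col_row mul_row_col (scalar_mx_block r s).
by move=> /eq_block_mx [-> -> _ ->] ->.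
Qed.

Lemma orth_block (A : 'M[R]_r) (B : 'M[R]_(r, s)) (C : 'M[R]_(s, r)) (D : 'M[R]_s) :
  (block_mx A B C D)^T *m block_mx A B C D = 1%:M -> B = 0 ->
  [/\ C = 0, A^T *m A = 1%:M, A *m A^T = 1%:M, D^T *m D = 1%:M & D *m D^T = 1%:M].
Proof.
move=> h B0; move: h; rewrite B0 tr_block_mx mulmx_block (scalar_mx_block r s).
rewrite !trmx0 ?mulmx0 ?mul0mx ?addr0 ?add0r => /eq_block_mx [hA hCD _ hD].
have hDD : D *m D^T = 1%:M by apply: mulmx1C.
have hC : C = 0.
  apply: trmx_inj; rewrite trmx0.
  by rewrite -(mulmx1 C^T) -hDD mulmxA hCD mul0mx.
move: hA; rewrite hC trmx0 mul0mx addr0 => hA.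
split => //; exact: mulmx1C.
Qed.
End Orth.
End Aux.
Import Aux.


Theorem mainTheorem2 (R : realType) (r s : nat) (hr : (0 < r)%N) (hs : (0 < s)%N)
  (Qbar Vbar Qi : 'M[R]_(r + s)) :
  orthogonal_mx Qbar -> orthogonal_mx Vbar -> orthogonal_mx Qi ->
  angles_lt_pi2 Qbar Vbar -> angles_lt_pi2 Qbar Qi ->
  (* Vbar = Pi_Qbar(Vbar) = Exp_Qbar(Log_Qbar(Vbar)) *)
  (exists Bt : 'M[R]_(s, r), LogRel Qbar Vbar Bt /\ Vbar = Qbar *m mexp (skewB Bt)) ->
  forall B0 : 'M[R]_(s, r), LogRel Qbar Qi B0 ->
  (* Gamma^+(Qi) = Exp_Vbar(Gamma(Qbar B0^skew)) = Vbar exp(B0^skew) *)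
  grass_equiv (Vbar *m mexp (skewB B0)) (Vbar *m Qbar^T *m Qi) /\
  (Qi = Qbar *m mexp (skewB B0) ->
     Vbar *m mexp (skewB B0) = Vbar *m Qbar^T *m Qi).
Proof.
move=> [hQ1 hQ2] _ [hQi1 hQi2] _ hang _ B0.
rewrite /LogRel /=.
move=> [k [U [sg [V [[hU [hV [hsg hM]]] hB]]]]].
split; last first.
  by move=> ->; rewrite !mulmxA -(mulmxA Vbar) hQ1 mulmx1.
move: hang hM hB; rewrite /angles_lt_pi2 /Gpart /Gperp.
have eQ := hsubmxK Qbar; have eQi := hsubmxK Qi.
move: (lsubmx Qbar) (rsubmx Qbar) (lsubmx Qi) (rsubmx Qi) eQ eQi => G H G0 H0 eQ eQi.
subst Qbar Qi.
have [GtG GtH HtH GGHH] := @orth_split R r s G H hQ1 hQ2.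
have [G0tG0 G0tH0 H0tH0 _] := @orth_split R r s G0 H0 hQi1 hQi2.
move=> hang hM hB.
set X := G^T *m G0 in hang hM.
set th := map_mx atan sg in hB.
have hMV : (1%:M - G *m G^T) *m G0 *m invmx X *m V = U *m diag_mx sg.
  by rewrite hM -!mulmxA hV mulmx1.
have hUe : U = (1%:M - G *m G^T) *m G0 *m invmx X *m V *m diag_mx (\row_l (sg 0 l)^-1).
  rewrite hMV -mulmxA mulmx_diag.
  have -> : \row_j (sg 0 j * (\row_l (sg 0 l)^-1) 0 j) = const_mx 1.
    by apply/rowP => l; rewrite !mxE mulfV // lt0r_neq0.
  by rewrite diag_const_mx mulmx1.
have GtM : G^T *m (1%:M - G *m G^T) = 0 by rewrite mulmxBr mulmx1 mulmxA GtG mul1mx subrr.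
have GtU : G^T *m U = 0 by rewrite hUe !mulmxA GtM !mul0mx.
have HtG : H^T *m G = 0 by rewrite -[H^T *m G]trmxK trmx_mul trmxK GtH trmx0.
have HtM : H^T *m (1%:M - G *m G^T) = H^T by rewrite mulmxBr mulmx1 mulmxA HtG mul0mx subr0.
have HHt : H *m H^T = 1%:M - G *m G^T by rewrite -GGHH [G *m G^T + _]addrC addrK.
set W := H^T *m U.
have WtW : W^T *m W = 1%:M.
  have aux : U^T *m (G *m G^T) *m U = 0 by rewrite -mulmxA -mulmxA GtU !mulmx0.
  rewrite /W trmx_mul trmxK mulmxA -(mulmxA U^T) HHt mulmxBr mulmx1 mulmxBl hU aux.
  by rewrite subr0.
have hB0 : B0 = W *m diag_mx th *m V^T.
  by rewrite /W -(mul1mx B0) -HtH -mulmxA hB !mulmxA.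
have hskew : skewB B0 = @Pm R k r s V W *m @Jm R k th *m (@Pm R k r s V W)^T.
  by rewrite PJP /skewB hB0 !trmx_mul trmxK tr_diag_mx mulmxA.
have hE : mexp (skewB B0) = @Ef R k r s V W th by rewrite hskew; exact: mexp_eq.
rewrite hE.
have hEtE := @EtE R k r s V W hV WtW th.
set Cv := 1%:M - V *m V^T + V *m diag_mx (@Cr R k th) *m V^T.
have VtCv : V^T *m Cv = diag_mx (@Cr R k th) *m V^T.
  by rewrite /Cv mulmxDr mulmxBr mulmx1 !mulmxA hV !mul1mx subrr add0r.
have hsin x : sin (atan x) = x * cos (atan x) :> R.
  have cD0 : cos (atan x) != 0.
    by apply/lt0r_neq0/cos_gt0_pihalf; rewrite atan_gtNpi2 atan_ltpi2.
  by rewrite -{2}(atanK x) /tan divfK.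
have hkey : lsubmx (@Ef R k r s V W th) = (row_mx G H)^T *m G0 *m invmx X *m Cv.
  rewrite Ef_block block_mxEh row_mxKl tr_row_mx !mul_col_mx mulmxV // mul1mx.
  congr col_mx.
  have := congr1 (mulmx H^T) hM; rewrite !mulmxA HtM => ->.
  rewrite -/W -[RHS]mulmxA VtCv mulmxA -[W *m diag_mx sg *m _]mulmxA mulmx_diag.
  by congr (W *m diag_mx _ *m V^T); apply/rowP => l; rewrite !mxE hsin mulrC.
move: (@Ef R k r s V W th) hEtE hkey => E hEtE hkey.
set QT := (row_mx G H)^T in hkey *.
have hQTQ : QT^T *m QT = 1%:M by rewrite /QT trmxK hQ2.
have EEt := mulmx1C hEtE.
have hZB : (lsubmx E)^T *m (QT *m H0) = 0.
  rewrite hkey !trmx_mul -!mulmxA (mulmxA QT^T) hQTQ mul1mx G0tH0.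
  by rewrite !mulmx0.
have hZ : E^T *m (QT *m row_mx G0 H0) = block_mx
   ((lsubmx E)^T *m (QT *m G0)) ((lsubmx E)^T *m (QT *m H0))
   ((rsubmx E)^T *m (QT *m G0)) ((rsubmx E)^T *m (QT *m H0)).
  by rewrite -{1}(hsubmxK E) tr_row_mx mul_mx_row mul_col_row.
have hZtZ : (E^T *m (QT *m row_mx G0 H0))^T *m (E^T *m (QT *m row_mx G0 H0)) = 1%:M.
  rewrite trmx_mul trmxK mulmxA -(mulmxA _ E) EEt mulmx1 trmx_mul.
  by rewrite -mulmxA (mulmxA QT^T) hQTQ mul1mx hQi1.
move: hZtZ; rewrite hZ => /orth_block /(_ hZB) [hC hA1 hA2 hD1 hD2].
exists ((lsubmx E)^T *m (QT *m G0)), ((rsubmx E)^T *m (QT *m H0)).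
split; first by split.
split; first by split.
rewrite -hZB -hC -hZ [RHS]mulmxA -(mulmxA Vbar E) EEt mulmx1.
by rewrite mulmxA.
Qed.
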